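(* Let $L\in\mathbb R^{N\times N}$ be symmetric positive semidefinite with eigenvalues $0=\lambda_1<\lambda_2\le\cdots\le\lambda_N$ and orthonormal eigenvectors $u_1,\dots,u_N$ (so $\ker L = \mathrm{span}(u_1)$). Let $P\in\mathbb R^{n\times N}$ have full row rank, let $P^+$ be its Moore–Penrose pseudoinverse, $\Pi = P^+P$, and suppose $\Pi u_1 = u_1$. Let $L_c = (P^+)^\top L P^+$ with eigenvalues $\tilde\lambda_1\le\cdots\le\tilde\lambda_n$, $\gamma_1 = \lambda_{\min}((PP^\top)^{-1})$, $\gamma_2 = \lambda_{\max}((PP^\top)^{-1})$. Let $k\le n$ and $\mathbf U_k = \mathrm{span}(u_1,\dots,u_k)$. If $L_c$ and $L$ are $(\mathbf U_k,\epsilon_k)$-similar and $\epsilon_k^2<\lambda_2/\lambda_k$, then $$\gamma_1\lambda_k\le\tilde\lambda_k\le\gamma_2\,\frac{(1+\epsilon_k)^2}{1-\epsilon_k^2(\lambda_k/\lambda_2)}\,\lambda_k.$$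
   Context: For PSD $M$, $\|y\|_M=\sqrt{y^\top My}$. $L_c$ and $L$ are $(\mathbf R,\epsilon)$-similar if $\epsilon\ge0$ and $\|x-P^+Px\|_L\le\epsilon\|x\|_L$ for all $x\in\mathbf R$. *)

(* Defs.v *)
From HB Require Import structures.
From mathcomp Require Import all_boot all_order all_algebra.
Set Implicit Arguments. Unset Strict Implicit. Unset Printing Implicit Defensive.
Import Order.TTheory GRing.Theory Num.Theory.
Local Open Scope ring_scope.

Definition mnorm (R : rcfType) (N : nat) (M : 'M[R]_N) (y : 'cV[R]_N) : R :=
  Num.sqrt ((y^T *m M *m y) 0 0).

Definition is_pinv (R : rcfType) (n N : nat) (P : 'M[R]_(n, N)) (X : 'M[R]_(N, n)) : Prop :=
  [/\ P *m X *m P = P, X *m P *m X = X,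
      (P *m X)^T = P *m X & (X *m P)^T = X *m P].

(* x lies in span(u_1,...,u_k) (vectors indexed from 0: u 0, ..., u (k-1)) *)
Definition in_span (R : rcfType) (N : nat) (u : nat -> 'cV[R]_N) (k : nat) (x : 'cV[R]_N) : Prop :=
  exists c : nat -> R, x = \sum_(i < k) c i *: u i.

Definition coarse_similar (R : rcfType) (n N : nat) (L : 'M[R]_N) (P : 'M[R]_(n, N))
    (Pp : 'M[R]_(N, n)) (S : 'cV[R]_N -> Prop) (eps : R) : Prop :=
  0 <= eps /\ forall x, S x -> mnorm L (x - Pp *m P *m x) <= eps * mnorm L x.

(* Main.v *)
From HB Require Import structures.
From mathcomp Require Import all_boot all_order all_algebra.
From mathcomp Require Import complex.
Import Order.TTheory GRing.Theory Num.Theory.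
Local Open Scope ring_scope.
Require Import Defs.
From mathcomp Require Import ring lra zify.
Set Implicit Arguments. Unset Strict Implicit. Unset Printing Implicit Defensive.
Lemma psd_of_eig (R : rcfType) n (A : 'M[R]_n) : A^T = A ->
  (forall a, eigenvalue A a -> 0 <= a) ->
  forall x : 'cV_n, 0 <= (x^T *m A *m x) 0 0.
Proof.
move=> AT Aeig x.
pose f := real_complex R.
have freal : forall r, f r \is Num.real by move=> r; apply/complex_realP; exists r.
pose Ac := map_mx f A.
have herm : Ac \is hermsymmx.
  apply/is_hermitianmxP; rewrite expr0 scale1r.
  apply/matrixP => i j; rewrite !mxE conj_Creal ?freal //.
  by rewrite -{1}AT mxE.
set U := spectralmx Ac; set d := spectral_diag Ac.
have Uu : U \is unitarymx := spectral_unitarymx Ac.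
have /orthomx_spectralP AcE := hermitian_normalmx herm.
rewrite invmx_unitary // in AcE.
have dreal := hermitian_spectral_diag_real herm.
have dge0 : forall i, 0 <= d 0 i.
  move=> i; have di_real : d 0 i \is Num.real by apply: (mxOverP dreal).
  have [r dr] := complex_realP _ di_real.
  rewrite dr ler0c; apply: Aeig.
  rewrite eigenvalue_root_char -(fmorph_root f) map_char_poly -eigenvalue_root_char.
  apply/eigenvalueP; exists (row i U).
    rewrite -row_mul -/Ac AcE !mulmxA (unitarymxP Uu) mul1mx row_mul row_diag_mx.
    by rewrite -scalemxAl -rowE dr.
  rewrite rowE mulmx_free_eq0; last by rewrite /row_free mxrank_unitary.
  apply/eqP => /matrixP /(_ 0 i); rewrite !mxE !eqxx /= => /eqP.
  by rewrite oner_eq0.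
rewrite -ler0c.
have -> : real_complex R ((x^T *m A *m x) 0 0) = ((map_mx f x)^T *m Ac *m map_mx f x) 0 0.
  by rewrite map_trmx -!map_mxM [RHS]mxE.
set xc := map_mx f x; set w := U *m xc.
have wE : xc^T *m (U ^t*)%sesqui = (w ^t*)%sesqui.
  rewrite /w trmx_mul map_mxM; congr (_ *m _).
  by apply/matrixP => i j; rewrite !mxE; symmetry; apply: conj_Creal; apply: freal.
rewrite AcE !mulmxA wE -mulmxA mxE.
apply: sumr_ge0 => j _; rewrite mul_mx_diag !mxE.
rewrite mulrC mulrA; apply: mulr_ge0; last exact: dge0.
exact: mul_conjC_ge0.
Qed.
Definition dotv (R : rcfType) m (x y : 'cV[R]_m) : R := (x^T *m y) 0 0.
Definition qf (R : rcfType) m (A : 'M[R]_m) (x : 'cV[R]_m) : R := (x^T *m A *m x) 0 0.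

Lemma dotvE (R : rcfType) m (x y : 'cV[R]_m) : dotv x y = \sum_i x i 0 * y i 0.
Proof. by rewrite /dotv mxE; apply: eq_bigr => i _; rewrite mxE. Qed.

Lemma dotvC (R : rcfType) m (x y : 'cV[R]_m) : dotv x y = dotv y x.
Proof. by rewrite !dotvE; apply: eq_bigr => i _; rewrite mulrC. Qed.

Lemma dotvDr (R : rcfType) m (x y z : 'cV[R]_m) : dotv x (y + z) = dotv x y + dotv x z.
Proof. by rewrite /dotv mulmxDr mxE. Qed.

Lemma dotvDl (R : rcfType) m (x y z : 'cV[R]_m) : dotv (y + z) x = dotv y x + dotv z x.
Proof. by rewrite dotvC dotvDr !(dotvC x). Qed.

Lemma dotvNr (R : rcfType) m (x y : 'cV[R]_m) : dotv x (- y) = - dotv x y.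
Proof. by rewrite /dotv mulmxN mxE. Qed.

Lemma dotvBr (R : rcfType) m (x y z : 'cV[R]_m) : dotv x (y - z) = dotv x y - dotv x z.
Proof. by rewrite dotvDr dotvNr. Qed.

Lemma dotvZr (R : rcfType) m (x y : 'cV[R]_m) a : dotv x (a *: y) = a * dotv x y.
Proof. by rewrite /dotv -scalemxAr mxE. Qed.

Lemma dotv_sumr (R : rcfType) m k (x : 'cV[R]_m) (c : 'I_k -> R) (y : 'I_k -> 'cV[R]_m) :
  dotv x (\sum_i c i *: y i) = \sum_i c i * dotv x (y i).
Proof.
rewrite /dotv mulmx_sumr summxE; apply: eq_bigr => i _.
by rewrite -scalemxAr mxE.
Qed.

Lemma dotv_ge0 (R : rcfType) m (x : 'cV[R]_m) : 0 <= dotv x x.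
Proof. by rewrite dotvE; apply: sumr_ge0 => i _; rewrite -expr2 sqr_ge0. Qed.

Lemma dotv_gt0 (R : rcfType) m (x : 'cV[R]_m) : x != 0 -> 0 < dotv x x.
Proof.
move=> xn0; rewrite lt_def dotv_ge0 andbT; apply: contra xn0 => /eqP h.
apply/eqP/matrixP => i j; rewrite (ord1 j) mxE.
have := (psumr_eq0P (P := predT) (fun i _ => sqr_ge0 (x i 0))).
rewrite -dotvE => /(_ h i isT) /eqP; rewrite sqrf_eq0 => /eqP //.
Qed.

Lemma qf_dot (R : rcfType) m (A : 'M[R]_m) x : qf A x = dotv x (A *m x).
Proof. by rewrite /qf /dotv mulmxA. Qed.

Lemma qf_mul (R : rcfType) m p (A : 'M[R]_m) (B : 'M[R]_(m, p)) x :
  qf A (B *m x) = qf (B^T *m A *m B) x.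
Proof. by rewrite /qf trmx_mul !mulmxA. Qed.

Definition colmx (R : rcfType) m k (u : nat -> 'cV[R]_m) : 'M[R]_(m, k) :=
  \matrix_(i < m, l < k) u l i 0.

Lemma colmxE (R : rcfType) m k (u : nat -> 'cV[R]_m) (c : 'cV[R]_k) :
  colmx k u *m c = \sum_(l < k) c l 0 *: u l.
Proof.
apply/matrixP => i j; rewrite (ord1 j) !mxE summxE.
by apply: eq_bigr => l _; rewrite !mxE mulrC.
Qed.

Definition orthon (R : rcfType) m k (u : nat -> 'cV[R]_m) :=
  forall i j, (i < k)%N -> (j < k)%N -> dotv (u i) (u j) = (i == j)%:R.

Lemma dot_colmx (R : rcfType) m k K (u : nat -> 'cV[R]_m) (c : 'cV[R]_k) (l : 'I_k) :
  orthon K u -> (k <= K)%N ->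
  dotv (u l) (colmx k u *m c) = c l 0.
Proof.
move=> hu hkK; have hl := leq_trans (ltn_ord l) hkK.
rewrite colmxE dotv_sumr.
rewrite (bigD1 l) //= big1 ?addr0.
  by rewrite hu ?eqxx ?mulr1.
move=> i hi; rewrite hu //; last exact: (leq_trans (ltn_ord i) hkK).
have -> : ((l : nat) == i) = false by apply/negbTE; rewrite eq_sym; exact: hi.
by rewrite mulr0.
Qed.

Lemma dot_colmx0 (R : rcfType) m k K (u : nat -> 'cV[R]_m) (c : 'cV[R]_k) l :
  orthon K u -> (k <= l)%N -> (l < K)%N ->
  dotv (u l) (colmx k u *m c) = 0.
Proof.
move=> hu hkl hl; rewrite colmxE dotv_sumr.
apply: big1 => i _; rewrite hu //; last exact: (leq_trans (ltn_ord i) (leq_trans hkl (ltnW hl))).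
case: eqP => [e|]; last by rewrite mulr0.
by move: hkl; rewrite e leqNgt ltn_ord.
Qed.

Lemma colmx_orth (R : rcfType) m k (u : nat -> 'cV[R]_m) :
  orthon k u -> (colmx k u)^T *m colmx k u = 1%:M.
Proof.
move=> hu; apply/matrixP => a b; rewrite !mxE -(hu a b) // dotvE.
by apply: eq_bigr => i _; rewrite !mxE.
Qed.

Lemma colmx_neq0 (R : rcfType) m k (u : nat -> 'cV[R]_m) (c : 'cV[R]_k) :
  orthon k u -> c != 0 -> colmx k u *m c != 0.
Proof.
move=> hu; apply: contra => /eqP h.
by rewrite -[c]mul1mx -(colmx_orth hu) -mulmxA h mulmx0.
Qed.

Lemma parseval (R : rcfType) m (u : nat -> 'cV[R]_m) :
  orthon m u -> forall y, y = \sum_(l < m) dotv (u l) y *: u l.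
Proof.
move=> hu y; have h := mulmx1C (colmx_orth hu).
have e : y = colmx m u *m ((colmx m u)^T *m y) by rewrite mulmxA h mul1mx.
rewrite {1}e colmxE; apply: eq_bigr => l _; congr (_ *: _).
by rewrite /dotv !mxE; apply: eq_bigr => i _; rewrite !mxE.
Qed.

Lemma rayleigh (R : rcfType) m (A : 'M[R]_m) (lam : nat -> R) (u : nat -> 'cV[R]_m) :
  (forall i, (i < m)%N -> A *m u i = lam i *: u i) -> orthon m u ->
  forall y, qf A y = \sum_(l < m) dotv (u l) y ^+ 2 * lam l /\
            dotv y y = \sum_(l < m) dotv (u l) y ^+ 2.
Proof.
move=> he hu y; have ye := parseval hu y.
split.
  have Ay : A *m y = \sum_(l < m) (dotv (u l) y * lam l) *: u l.
    rewrite {1}ye mulmx_sumr; apply: eq_bigr => l _.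
    by rewrite -scalemxAr he // scalerA mulrC.
  rewrite qf_dot Ay dotv_sumr; apply: eq_bigr => l _.
  by rewrite dotvC expr2; ring.
rewrite {1}ye dotvC dotv_sumr; apply: eq_bigr => l _.
by rewrite dotvC expr2.
Qed.

Lemma rayleigh_lb (R : rcfType) m (A : 'M[R]_m) (lam : nat -> R) (u : nat -> 'cV[R]_m) j y :
  (forall i, (i < m)%N -> A *m u i = lam i *: u i) -> orthon m u ->
  (forall l, (j <= l)%N -> (l < m)%N -> lam j <= lam l) ->
  (forall l, (l < j)%N -> (l < m)%N -> dotv (u l) y = 0) ->
  lam j * dotv y y <= qf A y.
Proof.
move=> he hu hmono hz; have [-> ->] := rayleigh he hu y.
rewrite mulr_sumr; apply: ler_sum => l _.
case: (ltnP l j) => hlj.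
  by rewrite hz // expr0n /= mul0r mulr0.
rewrite mulrC; exact: (ler_wpM2l (sqr_ge0 _) (hmono _ hlj _)).
Qed.

Lemma rayleigh_ub (R : rcfType) m (A : 'M[R]_m) (lam : nat -> R) (u : nat -> 'cV[R]_m) k y :
  (forall i, (i < m)%N -> A *m u i = lam i *: u i) -> orthon m u ->
  (forall l, (l < k)%N -> lam l <= lam k.-1) ->
  (forall l, (k <= l)%N -> (l < m)%N -> dotv (u l) y = 0) ->
  qf A y <= lam k.-1 * dotv y y.
Proof.
move=> he hu hmono hz; have [-> ->] := rayleigh he hu y.
rewrite mulr_sumr; apply: ler_sum => l _.
case: (ltnP l k) => hlk.
  by rewrite [X in _ <= X]mulrC; exact: (ler_wpM2l (sqr_ge0 _) (hmono _ hlk)).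
by rewrite hz // expr0n /= mul0r mulr0.
Qed.

Lemma exists_ker (F : fieldType) j k (B : 'M[F]_(j, k)) :
  (j < k)%N -> exists2 c : 'cV_k, c != 0 & B *m c = 0.
Proof.
move=> hjk; set K := kermx B^T.
have hK : K != 0.
  rewrite -mxrank_eq0 mxrank_ker mxrank_tr subn_eq0 -ltnNge.
  exact: leq_ltn_trans (rank_leq_row B) hjk.
have [i hi] : exists i, row i K != 0.
  apply/existsP; move: hK; apply: contraR; rewrite negb_exists => /forallP h.
  apply/eqP/row_matrixP => i; rewrite row0; exact/eqP/negPn/h.
exists (row i K)^T; first by rewrite trmx_eq0.
by rewrite -[B]trmxK -trmx_mul -row_mul mulmx_ker row0 trmx0.
Qed.

Lemma quad_disc (R : rcfType) (a b c : R) :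
  (forall t, 0 <= a + 2 * b * t + c * t ^+ 2) -> 0 <= c -> b ^+ 2 <= a * c.
Proof.
move=> h; rewrite le_eqVlt => /orP [/eqP c0 | cpos].
  rewrite -c0 mulr0; case: (eqVneq b 0) => [->|bn0]; first by rewrite expr0n.
  have := h (- (a + 1) / (2 * b)).
  have -> : a + 2 * b * (- (a + 1) / (2 * b)) + c * (- (a + 1) / (2 * b)) ^+ 2 = -1.
    rewrite -c0 mul0r addr0; field.
    exact: bn0.
  by rewrite oppr_ge0 ler10.
have := h (- b / c).
have -> : a + 2 * b * (- b / c) + c * (- b / c) ^+ 2 = (a * c - b ^+ 2) / c.
  by field; rewrite gt_eqF.
by rewrite ler_pdivlMr // mul0r subr_ge0.
Qed.

Lemma qf_sym_cross (R : rcfType) m (A : 'M[R]_m) (y e : 'cV[R]_m) :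
  A^T = A -> (e^T *m A *m y) 0 0 = (y^T *m A *m e) 0 0.
Proof.
move=> AT; have -> : e^T *m A *m y = (y^T *m A *m e)^T.
  by rewrite !trmx_mul trmxK AT mulmxA.
by rewrite mxE.
Qed.

Lemma qf_lin (R : rcfType) m (A : 'M[R]_m) (y e : 'cV[R]_m) t :
  A^T = A ->
  qf A (y + t *: e) = qf A y + 2 * (y^T *m A *m e) 0 0 * t + qf A e * t ^+ 2.
Proof.
move=> AT; rewrite /qf !mulmxDr -!scalemxAr [(_ + _)^T]linearD /= [(_ *: _)^T]linearZ /= !mulmxDl.
rewrite -!scalemxAl.
have h4 := qf_sym_cross y e AT.
move: h4; rewrite !mxE => ->; ring.
Qed.

Lemma cs_bound (R : rcfType) m (A : 'M[R]_m) (y e : 'cV[R]_m) eps :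
  A^T = A -> (forall x : 'cV[R]_m, 0 <= qf A x) -> 0 <= eps ->
  qf A e <= eps ^+ 2 * qf A y -> qf A (y - e) <= (1 + eps) ^+ 2 * qf A y.
Proof.
move=> AT psd he hq.
set b := (y^T *m A *m e) 0 0.
have cs : b ^+ 2 <= qf A y * qf A e.
  apply: quad_disc; last exact: psd.
  by move=> t; rewrite -qf_lin //; exact: psd.
have hy := psd y; have hee := psd e.
have hb : - b <= eps * qf A y.
  have h2 : (- b) ^+ 2 <= (eps * qf A y) ^+ 2.
    rewrite sqrrN (le_trans cs) //.
    have -> : (eps * qf A y) ^+ 2 = qf A y * (eps ^+ 2 * qf A y) by ring.
    exact: (ler_wpM2l hy hq).
  case: (lerP 0 (- b)) => hb0; last by apply: le_trans (ltW hb0) (mulr_ge0 he hy).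
  by rewrite -(ler_pXn2r (n := 2)) // nnegrE mulr_ge0.
have -> : y - e = y + (-1) *: e by rewrite scaleN1r.
rewrite qf_lin // -/b; lra.
Qed.

Lemma mx11_subZ (R : rcfType) (M N : 'M[R]_1) g : (M - g *: N) 0 0 = M 0 0 - g * N 0 0.
Proof. by rewrite !mxE. Qed.

Lemma mx11_Zsub (R : rcfType) (M N : 'M[R]_1) g : (g *: N - M) 0 0 = g * N 0 0 - M 0 0.
Proof. by rewrite !mxE. Qed.

Lemma qf_subs (R : rcfType) m (A : 'M[R]_m) (z : 'cV[R]_m) g :
  qf (A - g%:M) z = qf A z - g * dotv z z.
Proof.
by rewrite /qf /dotv mulmxBr mulmxBl mul_mx_scalar -scalemxAl mx11_subZ.
Qed.

Lemma qf_subs' (R : rcfType) m (A : 'M[R]_m) (z : 'cV[R]_m) g :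
  qf (g%:M - A) z = g * dotv z z - qf A z.
Proof.
by rewrite /qf /dotv mulmxBr mulmxBl mul_mx_scalar -scalemxAl mx11_Zsub.
Qed.

Theorem theorem2 (R : rcfType) (n N : nat)
  (L : 'M[R]_N) (lam : nat -> R) (u : nat -> 'cV[R]_N)
  (P : 'M[R]_(n, N)) (Pp : 'M[R]_(N, n))
  (mu : nat -> R) (v : nat -> 'cV[R]_n)
  (gamma1 gamma2 : R) (k : nat) (eps : R) :
  (1 < N)%N ->
  (* L symmetric positive semidefinite *)
  L^T = L -> (forall x : 'cV[R]_N, 0 <= (x^T *m L *m x) 0 0) ->
  (* eigenvalues 0 = lam_1 < lam_2 <= ... <= lam_N, orthonormal eigenvectors *)
  lam 0%N = 0 -> 0 < lam 1%N ->
  (forall i j, (1 <= i)%N -> (i <= j)%N -> (j < N)%N -> lam i <= lam j) ->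
  (forall i, (i < N)%N -> L *m u i = lam i *: u i) ->
  (forall i j, (i < N)%N -> (j < N)%N -> ((u i)^T *m u j) 0 0 = (i == j)%:R) ->
  (* P full row rank, Pp its Moore-Penrose pseudoinverse, Pi u_1 = u_1 *)
  \rank P = n -> is_pinv P Pp -> Pp *m P *m u 0%N = u 0%N ->
  (* eigenvalues mu_1 <= ... <= mu_n of L_c = (P^+)^T L P^+ *)
  (forall i j, (i <= j)%N -> (j < n)%N -> mu i <= mu j) ->
  (forall i, (i < n)%N -> (Pp^T *m L *m Pp) *m v i = mu i *: v i) ->
  (forall i j, (i < n)%N -> (j < n)%N -> ((v i)^T *m v j) 0 0 = (i == j)%:R) ->
  (* gamma1 = lambda_min, gamma2 = lambda_max of (P P^T)^{-1} *)
  eigenvalue (invmx (P *m P^T)) gamma1 ->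
  (forall a, eigenvalue (invmx (P *m P^T)) a -> gamma1 <= a) ->
  eigenvalue (invmx (P *m P^T)) gamma2 ->
  (forall a, eigenvalue (invmx (P *m P^T)) a -> a <= gamma2) ->
  (* 1 <= k <= n; (U_k, eps)-similarity; eps^2 < lam_2 / lam_k *)
  (1 <= k)%N -> (k <= n)%N ->
  coarse_similar L P Pp (in_span u k) eps ->
  eps ^+ 2 * lam k.-1 < lam 1%N ->
  gamma1 * lam k.-1 <= mu k.-1 /\
  mu k.-1 <= gamma2 * ((1 + eps) ^+ 2 / (1 - eps ^+ 2 * (lam k.-1 / lam 1%N))) * lam k.-1.
Proof.
move=> hN LT Lpsd lam0 lam1 lmono Leig Lorth rkP [PXP XPX S1 S2] Pu0 mumono Lceig Lcorth
  _ g1min _ g2max.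
case: k => [//|k] _ hkn [eps0 hsim] heps /=.
rewrite /= in heps.
set Lc := Pp^T *m L *m Pp.
have hnN : (n <= N)%N by rewrite -rkP rank_leq_col.
have hkN : (k < N)%N by lia.
have uorth : orthon N u := Lorth.
have vorth : orthon n v := Lcorth.
have Lpsd' : forall x, 0 <= qf L x := Lpsd.
have lam_ge0 : forall l, (l < N)%N -> 0 <= lam l.
  case=> [|l] hl; first by rewrite lam0.
  exact: le_trans (ltW lam1) (lmono 1%N l.+1 _ _ hl).
have lmono' : forall i j, (i <= j)%N -> (j < N)%N -> lam i <= lam j.
  case=> [|i] j hij hj; first by rewrite lam0 lam_ge0.
  exact: lmono.
have PPp : P *m Pp = 1%:M.
  apply/eqP; rewrite -subr_eq0; apply/eqP.
  have : (P *m Pp - 1%:M) *m P = 0 by rewrite mulmxBl PXP mul1mx subrr.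
  by move/eqP; rewrite mulmx_free_eq0 ?/row_free ?rkP // => /eqP.
have PiT : (Pp *m P)^T = Pp *m P := S2.
have Pi2 : Pp *m P *m (Pp *m P) = Pp *m P by rewrite mulmxA -(mulmxA Pp) PPp mulmx1.
set M := Pp^T *m Pp.
have MG : M *m (P *m P^T) = 1%:M.
  rewrite /M mulmxA -(mulmxA _ Pp P) -S2 trmx_mul !mulmxA -trmx_mul PPp trmx1 mul1mx.
  by rewrite -trmx_mul PPp trmx1.
have Minv : invmx (P *m P^T) = M.
  have [_ Gu] := mulmx1_unit MG.
  by rewrite -[invmx _]mul1mx -MG -mulmxA mulmxV // mulmx1.
have MT : M^T = M by rewrite /M trmx_mul trmxK.
have Mlo : forall z, gamma1 * dotv z z <= qf M z.
  move=> z; rewrite -subr_ge0 -qf_subs; apply: psd_of_eig.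
    by rewrite linearB /= MT tr_scalar_mx.
  move=> a /eigenvalueP [w hw wn0].
  have : eigenvalue M (a + gamma1).
    apply/eigenvalueP; exists w => //.
    move: hw; rewrite mulmxBr mul_mx_scalar => /eqP; rewrite subr_eq => /eqP ->.
    by rewrite scalerDl.
  rewrite -Minv => /g1min; rewrite -{1}(add0r gamma1) lerD2r //.
have Mhi : forall z, qf M z <= gamma2 * dotv z z.
  move=> z; rewrite -subr_ge0 -qf_subs'; apply: psd_of_eig.
    by rewrite linearB /= MT tr_scalar_mx.
  move=> a /eigenvalueP [w hw wn0].
  have : eigenvalue M (gamma2 - a).
    apply/eigenvalueP; exists w => //.
    move: hw; rewrite mulmxBr mul_mx_scalar => hw.
    by rewrite scalerBl -hw opprB addrCA subrr addr0.
  rewrite -Minv => /g2max; rewrite gerBl //.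
have vorthk : orthon k.+1 v.
  by move=> i j hi hj; apply: vorth; lia.
have uorthk : orthon k.+1 u.
  by move=> i j hi hj; apply: uorth; lia.
have qPp : forall x, qf L (Pp *m x) = qf Lc x by move=> x; rewrite qf_mul.
have dPp : forall x, dotv (Pp *m x) (Pp *m x) = qf M x.
  by move=> x; rewrite /dotv /qf /M trmx_mul !mulmxA.
split.
  set Vk := colmx k.+1 v.
  set Wl := \matrix_(i < k, j < n) (Pp^T *m u i) j 0.
  have [c cn0 hc] := exists_ker (Wl *m Vk) (ltnSn k).
  set x := Vk *m c.
  have xn0 : x != 0 := colmx_neq0 vorthk cn0.
  have dx := dotv_gt0 xn0.
  set y := Pp *m x.
  have hy0 : forall l, (l < k)%N -> (l < N)%N -> dotv (u l) y = 0.
    move=> l hl _; have hc' := hc; move/matrixP: hc' => /(_ (Ordinal hl) 0).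
    rewrite -mulmxA -/x [(0 : 'M_ _) _ _]mxE => <-.
    rewrite /y /dotv mulmxA !mxE; apply: eq_bigr => j _; rewrite !mxE.
    by congr (_ * _); apply: eq_bigr => a _; rewrite !mxE mulrC.
  have L1 := rayleigh_lb (j := k) (y := y) Leig uorth (fun l h1 h2 => lmono' _ _ h1 h2) hy0.
  have L2 : qf Lc x <= mu k * dotv x x.
    apply: (rayleigh_ub (k := k.+1) Lceig vorth).
      by move=> l hl; apply: mumono; lia.
    by move=> l hl1 hl2; apply: (dot_colmx0 _ vorth).
  rewrite /y qPp in L1.
  have L4 := Mlo x; rewrite -dPp -/y in L4.
  have lk0 := lam_ge0 k hkN.
  rewrite -(ler_pM2r dx); apply: le_trans L2.
  apply: le_trans L1; rewrite -mulrA mulrCA; exact: ler_wpM2l.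
set Uk := colmx k.+1 u.
set Wu := \matrix_(i < k, j < N) (P^T *m v i) j 0.
have [c cn0 hc] := exists_ker (Wu *m Uk) (ltnSn k).
set y := Uk *m c.
have yn0 : y != 0 := colmx_neq0 uorthk cn0.
have dy := dotv_gt0 yn0.
have hspan : in_span u k.+1 y.
  exists (fun l => c (inord l) 0); rewrite /y colmxE.
  by apply: eq_bigr => l _; rewrite inord_val.
set Piy := Pp *m P *m y.
set e := y - Piy.
have hqe : qf L e <= eps ^+ 2 * qf L y.
  have h := hsim y hspan; rewrite -/Piy -/e /mnorm in h.
  have h2 : Num.sqrt (qf L e) ^+ 2 <= (eps * Num.sqrt (qf L y)) ^+ 2.
    by rewrite !expr2; apply: ler_pM => //; apply: sqrtr_ge0.
  by rewrite exprMn !sqr_sqrtr // in h2.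
set x := P *m y.
have hx0 : forall l, (l < k)%N -> (l < n)%N -> dotv (v l) x = 0.
  move=> l hl _; have hc' := hc; move/matrixP: hc' => /(_ (Ordinal hl) 0).
  rewrite -mulmxA -/y [(0 : 'M_ _) _ _]mxE => <-.
  rewrite /x /dotv mulmxA !mxE; apply: eq_bigr => j _; rewrite !mxE.
  by congr (_ * _); apply: eq_bigr => a _; rewrite !mxE mulrC.
have U1 : mu k * dotv x x <= qf Lc x.
  apply: (rayleigh_lb Lceig vorth) => // l hl1 hl2; exact: mumono.
have ePiy : Piy = y - e by rewrite /e opprB addrC subrK.
have U2 : qf Lc x <= (1 + eps) ^+ 2 * qf L y.
  by rewrite -qPp /x mulmxA -/Piy ePiy; apply: cs_bound.
have U3 : qf L y <= lam k * dotv y y.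
  apply: (rayleigh_ub (k := k.+1) Leig uorth).
    by move=> l hl; apply: lmono' => //; lia.
  by move=> l hl1 hl2; apply: (dot_colmx0 _ uorth).
have he0 : dotv (u 0%N) e = 0.
  rewrite /e dotvBr; apply/eqP; rewrite subr_eq0; apply/eqP.
  by rewrite /Piy /dotv mulmxA -{1}PiT -trmx_mul Pu0.
have U4 : lam 1%N * dotv e e <= qf L e.
  apply: (rayleigh_lb Leig uorth).
    by move=> l hl1 hl2; apply: lmono.
  by move=> l; rewrite ltnS leqn0 => /eqP -> _.
have hPP : dotv Piy Piy = dotv y Piy.
  by rewrite /Piy /dotv trmx_mul PiT -!mulmxA (mulmxA P Pp) PPp mul1mx.
have Pyth : dotv y y = dotv Piy Piy + dotv e e.
  rewrite /e dotvBr !(dotvC (y - Piy)) !dotvBr hPP (dotvC Piy y); ring.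
have U5 : dotv Piy Piy <= gamma2 * dotv x x.
  by rewrite /Piy -mulmxA -/x dPp; apply: Mhi.
have lk0 := lam_ge0 k hkN.
have qy0 := Lpsd' y.
set T := lam 1%N - eps ^+ 2 * lam k.
have T0 : 0 < T by rewrite subr_gt0.
have A1 : lam 1%N * dotv e e <= eps ^+ 2 * lam k * dotv y y.
  apply: le_trans U4 _; apply: le_trans hqe _; rewrite -mulrA.
  by apply: ler_wpM2l => //; apply: sqr_ge0.
have A2 : T * dotv y y <= lam 1%N * (gamma2 * dotv x x).
  apply: le_trans (ler_wpM2l (ltW lam1) U5); rewrite /T.
  move: A1; rewrite Pyth; lra.
set Q := (1 + eps) ^+ 2.
have Q0 : 0 <= Q by apply: sqr_ge0.
have A3 : mu k * dotv x x <= Q * lam k * dotv y y.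
  apply: le_trans U1 _; apply: le_trans U2 _; rewrite -mulrA.
  exact: ler_wpM2l.
have dx : 0 < dotv x x.
  rewrite lt_def dotv_ge0 andbT; apply/eqP => dx0.
  move: A2; rewrite dx0 mulr0 mulr0 => A2.
  have : 0 < T * dotv y y by apply: mulr_gt0.
  by rewrite ltNge A2.
have A4 : mu k * dotv x x * T <= Q * lam k * (lam 1%N * (gamma2 * dotv x x)).
  apply: le_trans (ler_wpM2r (ltW T0) A3) _.
  apply: (le_trans _ (ler_wpM2l (mulr_ge0 Q0 lk0) A2)).
  rewrite le_eqVlt; apply/orP; left; apply/eqP; ring.
have E : gamma2 * (Q / (1 - eps ^+ 2 * (lam k / lam 1%N))) * lam k
          = Q * lam k * lam 1%N * gamma2 / T.
  rewrite /T; field.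
  by apply/andP; split; [exact: (lt0r_neq0 T0) | exact: (lt0r_neq0 lam1)].
rewrite E.
rewrite ler_pdivlMr // -(ler_pM2r dx).
rewrite mulrAC; apply: (le_trans A4).
rewrite le_eqVlt; apply/orP; left; apply/eqP; ring.
Qed.
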